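(* Let $m,n,p,q\in\mathbb{R}$ with $m<0$, and let $P(t)=t^5+mt^3+nt^2+pt+q$. Set $u=\frac{2\sqrt{-m}}{\sqrt5}$, $\alpha=\frac{16n}{u^3}$, $\beta=\frac{16p}{u^4}-5$, $\gamma=\frac{16q}{u^5}$, and $f(\theta)=\alpha\cos^2\theta+\beta\cos\theta+\cos 5\theta+\gamma$. Then the map $\theta\mapsto u\cos\theta$ restricts to a bijection from the set of zeros of $f$ in $[0,\pi]$ onto the set of roots of $P$ in $[-u,u]$. Explicitly, $\theta_0\in[0,\pi]$ satisfies $f(\theta_0)=0$ if and only if $t_0=u\cos\theta_0$ is a root of $P$. *)

(* Defs.v *)
From Stdlib Require Import Reals.
Open Scope R_scope.

Definition quinticP (m n p q t : R) : R :=
  t ^ 5 + m * t ^ 3 + n * t ^ 2 + p * t + q.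

Definition u_of (m : R) : R := 2 * sqrt (- m) / sqrt 5.

Definition f_theta (m n p q theta : R) : R :=
  let u := u_of m in
  let alpha := 16 * n / u ^ 3 in
  let beta := 16 * p / u ^ 4 - 5 in
  let gamma := 16 * q / u ^ 5 in
  alpha * (cos theta) ^ 2 + beta * cos theta + cos (5 * theta) + gamma.

(* Main.v *)
Require Import Defs.
From Stdlib Require Import Reals Lra.
Open Scope R_scope.

Lemma cos5 x : cos (5 * x) = 16 * cos x ^ 5 - 20 * cos x ^ 3 + 5 * cos x.
Proof.
  replace (5 * x) with (x + x + x + x + x) by ring.
  repeat (rewrite cos_plus || rewrite sin_plus).
  assert (H : sin x * sin x = 1 - cos x * cos x) by (pose proof (sin2_cos2 x); unfold Rsqr in *; lra).
  set (s := sin x) in *. set (c := cos x) in *.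
  transitivity ((c*c*c*c*c) - 10 * c*c*c*(s*s) + 5*c*((s*s)*(s*s))); [ring|].
  rewrite H. ring.
Qed.

Lemma u_pos m : m < 0 -> 0 < u_of m.
Proof.
  intro hm. unfold u_of. apply Rdiv_lt_0_compat.
  - apply Rmult_lt_0_compat; [lra|]. apply sqrt_lt_R0; lra.
  - apply sqrt_lt_R0; lra.
Qed.

Lemma u_sq m : m < 0 -> m = - (5/4) * (u_of m * u_of m).
Proof.
  intro hm. unfold u_of.
  assert (h5 : 0 < sqrt 5) by (apply sqrt_lt_R0; lra).
  replace (2 * sqrt (- m) / sqrt 5 * (2 * sqrt (- m) / sqrt 5))
    with (4 * (sqrt (-m) * sqrt (-m)) / (sqrt 5 * sqrt 5)) by (field; lra).
  rewrite !sqrt_sqrt by lra. field.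
Qed.

Lemma key m n p q th : m < 0 ->
  f_theta m n p q th = 16 * quinticP m n p q (u_of m * cos th) / u_of m ^ 5.
Proof.
  intro hm. pose proof (u_pos m hm) as hu. pose proof (u_sq m hm) as hsq.
  unfold f_theta, quinticP. rewrite cos5.
  set (u := u_of m) in *. rewrite hsq. field. lra.
Qed.

Theorem corollary1 (m n p q : R) (hm : m < 0) :
  (* explicit form: theta0 in [0,pi] is a zero of f iff u cos theta0 is a root of P *)
  (forall theta0 : R, 0 <= theta0 <= PI ->
     (f_theta m n p q theta0 = 0 <-> quinticP m n p q (u_of m * cos theta0) = 0)) /\
  (* the map theta |-> u cos theta sends zeros of f in [0,pi] into roots of P in [-u,u] *)
  (forall theta : R, 0 <= theta <= PI -> f_theta m n p q theta = 0 ->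
     - u_of m <= u_of m * cos theta <= u_of m /\
     quinticP m n p q (u_of m * cos theta) = 0) /\
  (* injective on the zeros of f in [0,pi] *)
  (forall theta1 theta2 : R, 0 <= theta1 <= PI -> 0 <= theta2 <= PI ->
     f_theta m n p q theta1 = 0 -> f_theta m n p q theta2 = 0 ->
     u_of m * cos theta1 = u_of m * cos theta2 -> theta1 = theta2) /\
  (* surjective onto the roots of P in [-u,u] *)
  (forall t : R, - u_of m <= t <= u_of m -> quinticP m n p q t = 0 ->
     exists theta : R, 0 <= theta <= PI /\ f_theta m n p q theta = 0 /\
       u_of m * cos theta = t).
Proof.
  pose proof (u_pos m hm) as hu.
  assert (hu5 : 0 < u_of m ^ 5) by (apply pow_lt; lra).
  assert (iff0 : forall th, f_theta m n p q th = 0 <-> quinticP m n p q (u_of m * cos th) = 0).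
  { intro th. rewrite key by lra. split; intro h.
    - apply (Rmult_eq_reg_r (16 / u_of m ^ 5)).
      + rewrite Rmult_0_l. rewrite <- h. field. lra.
      + apply Rgt_not_eq. apply Rdiv_lt_0_compat; lra.
    - rewrite h. field. lra. }
  split; [intros; apply iff0|].
  split.
  { intros th _ h. split; [|apply iff0; exact h].
    pose proof (COS_bound th). nra. }
  split.
  { intros t1 t2 h1 h2 _ _ he. apply cos_inj; auto.
    apply (Rmult_eq_reg_l (u_of m)); lra. }
  intros t ht hp. exists (acos (t / u_of m)).
  assert (hb : -1 <= t / u_of m <= 1).
  { split.
    - apply (Rmult_le_reg_r (u_of m)); auto. unfold Rdiv. rewrite Rmult_assoc, Rinv_l by lra. lra.
    - apply (Rmult_le_reg_r (u_of m)); auto. unfold Rdiv. rewrite Rmult_assoc, Rinv_l by lra. lra. }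
  assert (hc : u_of m * cos (acos (t / u_of m)) = t).
  { rewrite cos_acos by exact hb. field. lra. }
  split; [apply acos_bound|]. split; [|exact hc].
  apply iff0. rewrite hc. exact hp.
Qed.
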